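(* If $D_{15,14,6}$ is unsatisfiable, i.e., there is no packing $14$-coloring of $D_{15}$ that assigns color $6$ to the vertex $(0,0)$, then $\chi_\rho(\mathbb{Z}^2) \geq 15$.
   Context: $\mathbb{Z}^2$ denotes the graph with vertex set $\mathbb{Z}\times\mathbb{Z}$ and edges between points at $\ell_1$ distance $1$; its graph distance $d$ is the $\ell_1$ distance. A packing $k$-coloring of a graph $G=(V,E)$ is a function $f: V\to\{1,\ldots,k\}$ such that for any distinct $u,v\in V$ and any color $c$, $f(u)=f(v)=c$ implies $d(u,v)>c$. The packing chromatic number $\chi_\rho(G)$ is the least $k$ for which $G$ admits a packing $k$-coloring. For $r\ge 0$, $D_r$ is the subgraph of $\mathbb{Z}^2$ induced by $\{u \in \mathbb{Z}^2 : d(u,(0,0)) \le r\}$, with distances measured as $\ell_1$ distances. $D_{r,k,c}$ denotes the problem of deciding whether $D_r$ admits a packing $k$-coloring assigning color $c$ to $(0,0)$; it is called unsatisfiable if no such coloring exists. *)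

(* Defs.v *)
From Stdlib Require Import ZArith Lia.
Open Scope Z_scope.

(* l1 distance = graph distance of Z^2 *)
Definition dist (u v : Z * Z) : Z :=
  Z.abs (fst u - fst v) + Z.abs (snd u - snd v).

(* Values of f outside V are irrelevant. *)
Definition packing_coloring (V : Z * Z -> Prop) (k : nat) (f : Z * Z -> nat) : Prop :=
  (forall u, V u -> (1 <= f u)%nat /\ (f u <= k)%nat) /\
  (forall u v, V u -> V v -> u <> v -> f u = f v -> dist u v > Z.of_nat (f u)).

Definition Z2 : Z * Z -> Prop := fun _ => True.

Definition D (r : Z) : Z * Z -> Prop := fun u => dist u (0, 0) <= r.

Definition D_sat (r : Z) (k c : nat) : Prop :=
  exists f, packing_coloring (D r) k f /\ f (0, 0) = c.

(* Main.v *)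
Require Import Defs.
From Stdlib Require Import ZArith Lia Classical.

Lemma dist_shift (u w v : Z * Z) :
  dist (fst u + fst v, snd u + snd v) (fst w + fst v, snd w + snd v) = dist u w.
Proof. unfold dist; simpl. f_equal; f_equal; lia. Qed.

Theorem lemma2 :
  ~ D_sat 15 14 6 ->
  forall (k : nat) (f : Z * Z -> nat), packing_coloring Z2 k f -> (15 <= k)%nat.
Proof.
  intros Hns k f [Hr Hp].
  destruct (Nat.le_gt_cases 15 k) as [H|Hk]; [exact H|exfalso].
  assert (Hv : exists v, (exists x, f x = 6%nat) -> f v = 6%nat).
  { destruct (classic (exists x, f x = 6%nat)) as [[x Hx]|Hn].
    - exists x; auto.
    - exists (0,0); intro C; contradiction. }
  destruct Hv as [v Hv].
  apply Hns.
  exists (fun u : Z*Z => if (Z.eqb (fst u) 0 && Z.eqb (snd u) 0)%bool then 6%nat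
                   else f (fst u + fst v, snd u + snd v)).
  split; [|reflexivity].
  split.
  - intros u _. destruct (Z.eqb_spec (fst u) 0), (Z.eqb_spec (snd u) 0); simpl;
      try lia; destruct (Hr (fst u + fst v, snd u + snd v) I); lia.
  - intros [u1 u2] [w1 w2] _ _ Hne. simpl.
    assert (Hgen : forall a1 a2 b1 b2, (a1,a2) <> (b1,b2) ->
       f (a1 + fst v, a2 + snd v) = f (b1 + fst v, b2 + snd v) ->
       dist (a1,a2) (b1,b2) > Z.of_nat (f (a1 + fst v, a2 + snd v))).
    { intros a1 a2 b1 b2 Hab E.
      rewrite <- (dist_shift (a1,a2) (b1,b2) v). simpl.
      apply Hp; [exact I|exact I| |exact E].
      intro E2; injection E2; intros; apply Hab; f_equal; lia. }
    assert (H0 : forall a1 a2 : Z, f (0 + fst v, 0 + snd v) = f v).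
    { intros. destruct v; simpl; f_equal. }
    destruct (Z.eqb_spec u1 0), (Z.eqb_spec u2 0), (Z.eqb_spec w1 0), (Z.eqb_spec w2 0);
      simpl; intros Heq; subst;
      try (exfalso; apply Hne; reflexivity);
      try (apply Hgen; assumption).
    all: try (assert (Hf : f v = 6%nat) by (apply Hv; eexists; symmetry; exact Heq);
          replace 6 with (Z.of_nat (f v)) by (rewrite Hf; reflexivity); rewrite <- (H0 0 0); apply Hgen; [exact Hne| rewrite H0; congruence]).
    all: try (assert (Hf : f v = 6%nat) by (apply Hv; eexists; exact Heq);
          apply Hgen; [exact Hne| rewrite H0; congruence]).
Qed.
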